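(* Let $i,m\in\mathbb{N}$ and $A=(a_0,\dots,a_i)\in\mathbb{N}^*$. Then \[ \begin{pmatrix} p_i & q_i \\ p_{i-1} & q_{i-1}\end{pmatrix} = \begin{pmatrix} \tilde p_i & \tilde p_{i-1} \\ \tilde q_i & \tilde q_{i-1}\end{pmatrix}. \] Furthermore, $A$ is $m$-palindromic if and only if \[ \begin{pmatrix} p_i & m q_i \\ p_{i-1} & q_{i-1}\end{pmatrix} = \begin{pmatrix} \tilde p_i & \tilde q_i \\ m\tilde p_{i-1} & \tilde q_{i-1}\end{pmatrix}. \] Equivalently, $A$ is $m$-palindromic if and only if $m q_i = p_{i-1}$.
   Context: $\mathbb{N}$ denotes the positive integers and $\mathbb{N}^*$ the set of finite sequences of positive integers. For a finite sequence $(a_0,\dots,a_i)$, $[a_0,\dots,a_i]$ denotes the (finite) continued fraction with partial quotients $a_0,\dots,a_i$. For $A=(a_0,\dots,a_i)$, the convergents are $[a_0,\dots,a_k]=p_k/q_k$ in lowest terms ($0\le k\le i$), with $p_{-1}=1$, $q_{-1}=0$; equivalently $\begin{pmatrix} p_i & p_{i-1}\\ q_i & q_{i-1}\end{pmatrix}=\begin{pmatrix} a_0&1\\1&0\end{pmatrix}\cdots\begin{pmatrix} a_i&1\\1&0\end{pmatrix}$. The reversal of $A$ is $\widetilde A=(a_i,\dots,a_0)$, and its convergents are denoted $\tilde p_k/\tilde q_k$ ($0\le k\le i$). A finite sequence $A$ is called $m$-palindromic (an $m$-palindrome) if $[A]=m[\widetilde A]$. *)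

(* Defs.v *)
From mathcomp Require Import all_boot all_order all_algebra.
Set Implicit Arguments. Unset Strict Implicit. Unset Printing Implicit Defensive.
Import Order.TTheory GRing.Theory Num.Theory.
Local Open Scope ring_scope.

Definition mx2 (a b c d : int) : 'M[int]_2 :=
  \matrix_(r < 2, k < 2)
    if r == 0 then (if k == 0 then a else b) else (if k == 0 then c else d).

Definition cf_step (a : nat) : 'M[int]_2 := mx2 a%:Z 1 1 0.

(* convmx (a_0,...,a_i) = [a_0 1;1 0] ... [a_i 1;1 0]
   = [ p_i  p_{i-1} ; q_i  q_{i-1} ]. *)
Definition convmx (A : seq nat) : 'M[int]_2 :=
  foldr (fun a M => cf_step a *m M) 1%:M A.

Definition cf_p  (A : seq nat) : int := convmx A 0 0.
Definition cf_p1 (A : seq nat) : int := convmx A 0 1.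
Definition cf_q  (A : seq nat) : int := convmx A 1 0.
Definition cf_q1 (A : seq nat) : int := convmx A 1 1.

Fixpoint cf_val (A : seq nat) : rat :=
  match A with
  | [::] => 0
  | [:: a] => a%:R
  | a :: s => a%:R + (cf_val s)^-1
  end.

Definition m_palindromic (m : nat) (A : seq nat) : Prop :=
  cf_val A = m%:R * cf_val (rev A).

(* Main.v *)
Require Import Defs.
From mathcomp Require Import all_boot all_order all_algebra.
From mathcomp Require Import ring lra zify.
Import Order.TTheory GRing.Theory Num.Theory.
Local Open Scope ring_scope.

Lemma mx2E (M : 'M[int]_2) : M = mx2 (M 0 0) (M 0 1) (M 1 0) (M 1 1).
Proof.
apply/matrixP=> r k; rewrite !mxE.
case: r => [[|[|//]] Hr]; case: k => [[|[|//]] Hk] /=;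
by congr (M _ _); apply: val_inj.
Qed.

Lemma mx2_inj a b c d a' b' c' d' :
  mx2 a b c d = mx2 a' b' c' d' -> [/\ a = a', b = b', c = c' & d = d'].
Proof.
move=> H.
have H00 := congr1 (fun M : 'M[int]_2 => M 0 0) H.
have H01 := congr1 (fun M : 'M[int]_2 => M 0 1) H.
have H10 := congr1 (fun M : 'M[int]_2 => M 1 0) H.
have H11 := congr1 (fun M : 'M[int]_2 => M 1 1) H.
by move: H00 H01 H10 H11; rewrite !mxE /=.
Qed.

Lemma mx2_00 a b c d : mx2 a b c d 0 0 = a. Proof. by rewrite mxE. Qed.
Lemma mx2_01 a b c d : mx2 a b c d 0 1 = b. Proof. by rewrite mxE. Qed.
Lemma mx2_10 a b c d : mx2 a b c d 1 0 = c. Proof. by rewrite mxE. Qed.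
Lemma mx2_11 a b c d : mx2 a b c d 1 1 = d. Proof. by rewrite mxE. Qed.

Lemma step_mul a x y z w :
  cf_step a *m mx2 x y z w = mx2 (a%:Z * x + z) (a%:Z * y + w) x y.
Proof.
apply/matrixP=> r k; rewrite !mxE !big_ord_recr big_ord0 /= !mxE /=.
case: r => [[|[|//]] Hr]; case: k => [[|[|//]] Hk] /=; ring.
Qed.

Lemma convmx_cat s t : convmx (s ++ t) = convmx s *m convmx t.
Proof.
elim: s => [|a s IH] /=; first by rewrite mul1mx.
by rewrite IH mulmxA.
Qed.

Lemma step_tr a : (cf_step a)^T = cf_step a.
Proof.
apply/matrixP=> r k; rewrite !mxE.
case: r => [[|[|//]] Hr]; case: k => [[|[|//]] Hk] //=.
Qed.

Lemma convmx_rev A : convmx (rev A) = (convmx A)^T.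
Proof.
elim: A => [|a s IH] /=; first by rewrite trmx1.
rewrite rev_cons -cats1 convmx_cat IH /= mulmx1 trmx_mul step_tr.
by [].
Qed.

Lemma cf_val_pos A : A != [::] -> all (fun a => 0 < a)%N A ->
  [/\ 0 < cf_p A, 0 < cf_q A & cf_val A = (cf_p A)%:~R / (cf_q A)%:~R].
Proof.
rewrite /cf_p /cf_q.
elim: A => [//|a s IH] _ /andP [Ha Hs].
case: s IH Hs => [|b s] IH Hs.
  rewrite /= mulmx1 /cf_step !mxE /=; split => //.
  by rewrite divr1.
have [Hp Hq Hv] := IH isT Hs.
have -> : convmx [:: a, b & s] = cf_step a *m convmx (b :: s) by [].
rewrite [in convmx (b :: s)](mx2E (convmx (b :: s))).
set M := convmx (b :: s).
rewrite step_mul mx2_00 mx2_10.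
have Ha' : (0 < a%:Z) by rewrite ltz_nat.
split => //.
  by rewrite ltr_wpDr ?ltW // mulr_gt0.
have -> : cf_val [:: a, b & s] = a%:R + (cf_val (b :: s))^-1 by [].
rewrite Hv.
have Hp' : (M 0 0)%:~R != 0 :> rat by rewrite intr_eq0 gt_eqF.
have Hq' : (M 1 0)%:~R != 0 :> rat by rewrite intr_eq0 gt_eqF.
rewrite invf_div rmorphD rmorphM /=.
change (cf_step b *m convmx s) with M.
rewrite -[(a%:Z)%:~R]/(a%:R : rat).
field; exact: Hp'.
Qed.

Theorem lemma3p2 (i m : nat) (A : seq nat) :
  (0 < i)%N -> (0 < m)%N -> size A = i.+1 -> all (fun a => 0 < a)%N A ->
  [/\ mx2 (cf_p A) (cf_q A) (cf_p1 A) (cf_q1 A)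
      = mx2 (cf_p (rev A)) (cf_p1 (rev A)) (cf_q (rev A)) (cf_q1 (rev A)),
      m_palindromic m A <->
        mx2 (cf_p A) (m%:Z * cf_q A) (cf_p1 A) (cf_q1 A)
        = mx2 (cf_p (rev A)) (cf_q (rev A)) (m%:Z * cf_p1 (rev A)) (cf_q1 (rev A))
    & m_palindromic m A <-> m%:Z * cf_q A = cf_p1 A].
Proof.
move=> _ Hm HA Hpos.
have HA0 : A != [::] by apply/eqP => E; rewrite E in HA.
have HR0 : rev A != [::] by rewrite -size_eq0 size_rev size_eq0.
have HRpos : all (fun a => 0 < a)%N (rev A) by rewrite all_rev.
have [Hp Hq Hv] := @cf_val_pos A HA0 Hpos.
have [Hp' Hq' Hv'] := @cf_val_pos (rev A) HR0 HRpos.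
rewrite -/(cf_p A) -/(cf_q A) in Hp Hq Hv.
rewrite -/(cf_p (rev A)) -/(cf_q (rev A)) in Hp' Hq' Hv'.
have Ep : cf_p (rev A) = cf_p A by rewrite /cf_p convmx_rev mxE.
have Eq : cf_q (rev A) = cf_p1 A by rewrite /cf_q /cf_p1 convmx_rev mxE.
have Ep1 : cf_p1 (rev A) = cf_q A by rewrite /cf_q /cf_p1 convmx_rev mxE.
have Eq1 : cf_q1 (rev A) = cf_q1 A by rewrite /cf_q1 convmx_rev mxE.
have Hpal : m_palindromic m A <-> m%:Z * cf_q A = cf_p1 A.
  rewrite /m_palindromic.
  change (cf_val A = m%:R * cf_val (rev A) <-> m%:Z * cf_q A = cf_p1 A).
  have {}Hv' : cf_val (rev A) = (cf_p A)%:~R / (cf_p1 A)%:~R.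
    by rewrite Hv'; congr (_ / _); congr (_%:~R); [exact Ep | exact Eq].
  have Hz : 0 < cf_p1 A by move: Hq'; rewrite /cf_q /cf_p1 convmx_rev mxE.
  rewrite Hv Hv'.
  have nX : (cf_p A)%:~R != 0 :> rat by rewrite intr_eq0 gt_eqF.
  have nY : (cf_q A)%:~R != 0 :> rat by rewrite intr_eq0 gt_eqF.
  have nZ : (cf_p1 A)%:~R != 0 :> rat by rewrite intr_eq0 gt_eqF.
  set X := (cf_p A)%:~R : rat in nX *.
  set Y := (cf_q A)%:~R : rat in nY *.
  set Z := (cf_p1 A)%:~R : rat in nZ *.
  split.
    move=> H.
    have E : Z = (Z * Y / X) * (X / Y) by field; rewrite nX nY.
    rewrite H in E.
    have E2 : Z = m%:R * Y by rewrite E; field; rewrite nX nZ.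
    apply/(@intr_inj rat).
    by rewrite rmorphM /= -/Z -/Y E2.
  move=> H.
  have E2 : Z = m%:R * Y by rewrite /Z -H rmorphM.
  rewrite E2; field.
  by rewrite nY pnatr_eq0 -lt0n Hm.
split.
- by rewrite Ep Eq Ep1 Eq1.
- rewrite Hpal Ep Eq Ep1 Eq1; split; first by move=> ->.
  by case/mx2_inj.
- exact: Hpal.
Qed.
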